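(* Let $A$ be a circular $m\times n$ matrix, $b\in\mathbb{Z}_+^m$ and $\beta$ a nonnegative integer. Then the polytope $Q_\beta(A,b):=\{x\in\mathbb{R}^n: Ax\ge b,\ x\ge0,\ \mathbf{1}^Tx=\beta\}$ is integral (all its vertices are integral).
   Context: Notation: $[n]=\{1,\dots,n\}$ with addition mod $n$; for $a,c\in[n]$ with $t\ge0$ minimal such that $a+t\equiv c\pmod n$, $[a,c)_n=\{a,a+1,\dots,a+t-1\}$ (mod $n$). An $m\times n$ $\{0,1\}$-matrix $A$ (columns indexed by $[n]$) is circular if for each row $i$ there are $\ell_i\in[n]$ and an integer $k_i$ with $2\le k_i\le n-1$ such that row $i$ is the incidence vector of $[\ell_i,\ell_i+k_i)_n$. $\mathbf{1}$ denotes the all-ones vector. *)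

(* Defs.v *)
From HB Require Import structures.
From mathcomp Require Import all_boot all_order all_algebra.
Set Implicit Arguments. Unset Strict Implicit. Unset Printing Implicit Defensive.
Import Order.TTheory GRing.Theory Num.Theory.
Local Open Scope ring_scope.

(* Columns are indexed by 'I_n = {0,...,n-1} (0-based shift of [n]).
   j lies in the cyclic interval [l, l+k)_n iff (j - l) mod n < k. *)

Definition cyc_mem (n : nat) (l : 'I_n) (k : nat) (j : 'I_n) : bool :=
  ((j + n - l) %% n < k)%N.

Definition circular (R : nzRingType) (m n : nat) (A : 'M[R]_(m, n)) : Prop :=
  forall i : 'I_m, exists (l : 'I_n) (k : nat),
    (2 <= k)%N /\ (k <= n - 1)%N /\
    forall j : 'I_n, A i j = (cyc_mem l k j)%:R.

Definition Qbeta (R : realFieldType) (m n : nat) (A : 'M[R]_(m, n))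
    (b : 'I_m -> nat) (beta : nat) (x : 'cV[R]_n) : Prop :=
  (forall i : 'I_m, (b i)%:R <= (A *m x) i 0) /\
  (forall j : 'I_n, 0 <= x j 0) /\
  \sum_(j < n) x j 0 = beta%:R.

Definition vertex (R : realFieldType) (n : nat) (P : 'cV[R]_n -> Prop)
    (x : 'cV[R]_n) : Prop :=
  P x /\ forall (y z : 'cV[R]_n) (t : R), P y -> P z -> 0 < t -> t < 1 ->
    x = t *: y + (1 - t) *: z -> y = z.

Definition integral_vector (R : realFieldType) (n : nat) (x : 'cV[R]_n) : Prop :=
  forall j : 'I_n, exists c : int, x j 0 = c%:~R.

Definition integral_polytope (R : realFieldType) (n : nat)
    (P : 'cV[R]_n -> Prop) : Prop :=
  forall x, vertex P x -> integral_vector x.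

(* Main.v *)
Require Import Defs.
From HB Require Import structures.
From mathcomp Require Import all_boot all_order all_algebra.
From mathcomp Require Import zify ring lra.
From Stdlib Require Import ClassicalEpsilon.
Import Order.TTheory GRing.Theory Num.Theory.
Set Implicit Arguments. Unset Strict Implicit.
Local Open Scope ring_scope.

Definition isZ (R : realFieldType) (v : R) := exists c : int, v = c%:~R.

Lemma isZB (R : realFieldType) (a b : R) : isZ a -> isZ b -> isZ (a - b).
Proof. by move=> [c1 ->] [c2 ->]; exists (c1 - c2); rewrite rmorphB. Qed.
Lemma isZD (R : realFieldType) (a b : R) : isZ a -> isZ b -> isZ (a + b).
Proof. by move=> [c1 ->] [c2 ->]; exists (c1 + c2); rewrite rmorphD. Qed.
Lemma isZn (R : realFieldType) (k : nat) : isZ (k%:R : R).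
Proof. by exists k%:Z. Qed.

Definition Y (R : realFieldType) n (f : 'I_n -> R) (c : nat) : R :=
  \sum_(j < n) ((j < c)%N%:R) * f j.

Lemma Y0 (R : realFieldType) n (f : 'I_n -> R) : Y f 0 = 0.
Proof. by rewrite /Y big1 // => j _; rewrite mul0r. Qed.

Lemma YS (R : realFieldType) n (f : 'I_n -> R) c (hc : (c < n)%N) :
  Y f c.+1 = Y f c + f (Ordinal hc).
Proof.
rewrite /Y (bigD1 (Ordinal hc)) //= [in RHS](bigD1 (Ordinal hc)) //= ltnSn ltnn.
rewrite mul1r mul0r add0r addrC; congr (_ + _); apply: eq_bigr => j hj.
have hj' : (nat_of_ord j != c) by apply: contra hj => /eqP h; apply/eqP/val_inj.
by rewrite ltnS leq_eqVlt (negbTE hj').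
Qed.

Lemma Yn (R : realFieldType) n (f : 'I_n -> R) : Y f n = \sum_j f j.
Proof. by apply: eq_bigr => j _; rewrite ltn_ord mul1r. Qed.

Lemma cyc_nat (n : nat) (l : 'I_n) k (j : 'I_n) : (k <= n)%N ->
  (cyc_mem l k j + (j < l)%N = (j < minn (l+k) n)%N + (j < l+k-n)%N)%N.
Proof.
move=> hk; rewrite /cyc_mem; have hj := ltn_ord j; have hl := ltn_ord l.
case: (ltnP j l) => hjl.
  rewrite modn_small; last by lia.
  have -> : (j < minn (l + k) n)%N by lia.
  have -> : (j + n - l < k)%N = (j < l + k - n)%N by apply/idP/idP; lia.
  by rewrite addnC.
have -> : (j + n - l = (j - l) + n)%N by lia.
rewrite modnDr modn_small; last by lia.
have -> : (j < l + k - n)%N = false by apply/negbTE; lia.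
have -> : (j - l < k)%N = (j < minn (l + k) n)%N by apply/idP/idP; lia.
by [].
Qed.

Lemma cyc_row (R : realFieldType) n (l : 'I_n) k (f : 'I_n -> R) : (k <= n)%N ->
  \sum_j (cyc_mem l k j)%:R * f j =
  Y f (minn (l+k) n) - Y f l + Y f (l+k-n)%N.
Proof.
move=> hk; rewrite /Y -sumrB -big_split /=; apply: eq_bigr => j _.
rewrite -mulrBl -mulrDl; congr (_ * _).
have := congr1 (fun t : nat => (t%:R : R)) (cyc_nat l j hk).
rewrite /= !natrD => h; lra.
Qed.
Lemma pert (R : realFieldType) (a c s e : R) : c <= a -> `|s| <= 1 -> 0 <= e ->
  (s != 0 -> e <= a - c) -> c <= a + e * s /\ c <= a - e * s.
Proof.
move=> hca hs he; have [->|s0] := eqVneq s 0; first by rewrite mulr0 addr0 subr0.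
move=> /(_ isT) hea; move: hs; rewrite ler_norml => /andP[h1 h2]; split; nra.
Qed.

Lemma Ytele (R : realFieldType) n (p : nat -> bool) (d : 'I_n -> R) :
  (forall j : 'I_n, d j = (p j.+1)%:R - (p j)%:R) ->
  forall c, (c <= n)%N -> Y d c = (p c)%:R - (p 0%N)%:R.
Proof.
move=> hd; elim=> [|c IH] hc; first by rewrite Y0 subrr.
rewrite (YS _ hc) IH ?(ltnW hc) // hd /=; ring.
Qed.

Theorem lemma3p1 (R : realFieldType) (m n : nat) (A : 'M[R]_(m, n))
    (b : 'I_m -> nat) (beta : nat) :
  circular A -> integral_polytope (Qbeta A b beta).
Proof.
move=> hA x [[hrow [hnn hsum]] hvx].
have rowF i : exists l : 'I_n, exists k, (k <= n)%N /\ forall F : 'cV[R]_n,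
    (A *m F) i 0 = Y (fun j => F j 0) (minn (l+k) n) - Y (fun j => F j 0) l
                   + Y (fun j => F j 0) (l+k-n)%N.
  have [l [k [_ [hk hAi]]]] := hA i.
  exists l, k; split; first lia.
  move=> F; rewrite mxE -cyc_row; last lia.
  by apply: eq_bigr => j _; rewrite hAi.
have Yx_n : Y (fun j => x j 0) n = beta%:R by rewrite Yn.
have hyZ : forall c, (c <= n)%N -> isZ (Y (fun j => x j 0) c).
  move=> c0 hc0; apply: Classical_Prop.NNPP => hnz.
  set f := (fun j : 'I_n => x j 0) in hnz Yx_n *.
  pose p c := if excluded_middle_informative (isZ (Y f c - Y f c0)) then true else false.
  have pP c : p c = true <-> isZ (Y f c - Y f c0).
    by rewrite /p; case: excluded_middle_informative.
  have key u v : p u != p v -> ~ isZ (Y f u - Y f v).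
    case pu: (p u); case pv: (p v) => // _ hz.
      have : p v = true; last by rewrite pv.
      apply/pP; have := isZB (proj1 (pP u) pu) hz.
      by congr isZ; ring.
    have : p u = true; last by rewrite pu.
    apply/pP; have := isZD hz (proj1 (pP v) pv).
    by congr isZ; ring.
  have p0 : p 0%N = false.
    apply/negbTE/negP => /pP h; apply: hnz; have := isZB (isZn R 0) h.
    by rewrite Y0; congr isZ; ring.
  have pn : p n = false.
    apply/negbTE/negP => /pP h; apply: hnz; have := isZB (isZn R beta) h.
    by rewrite Yx_n; congr isZ; ring.
  have pc0 : p c0 = true by apply/pP; rewrite subrr; exact: (isZn R 0).
  pose d : 'cV[R]_n := \col_j ((p j.+1)%:R - (p j)%:R).
  have Yd c : (c <= n)%N -> Y (fun j => d j 0) c = (p c)%:R.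
    move=> hc; rewrite (@Ytele R n p) ?p0 ?subr0 // => j; by rewrite mxE.
  have Yf_step (j : 'I_n) : x j 0 = Y f j.+1 - Y f j.
    rewrite (YS _ (ltn_ord j)) addrC addKr /f; congr (x _ 0); exact: val_inj.
  have colF (j : 'I_n) : `|d j 0| <= 1 /\ (d j 0 != 0 -> 0 < x j 0).
    rewrite mxE; split.
      by case: (p j.+1); case: (p j); rewrite ?subrr ?normr0 ?subr0 ?sub0r ?normrN ?normr1.
    move=> hne; rewrite lt_def hnn andbT; apply/eqP => hx0.
    have hpne : p j.+1 != p j by apply: contra hne => /eqP ->; rewrite subrr.
    apply: (key _ _ hpne); rewrite -Yf_step hx0; exact: (isZn R 0).
  have rowK i : `|(A *m d) i 0| <= 1 /\ ((A *m d) i 0 != 0 -> (b i)%:R < (A *m x) i 0).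
    have [l [k [hk hF]]] := rowF i.
    have [u [v [hu [huv hz]]]] : exists u v, (A *m d) i 0 = (p u)%:R - (p v)%:R
         /\ (u <= n)%N /\ isZ ((A *m x) i 0 - (Y f u - Y f v)).
      have hl := ltn_ord l.
      case: (leqP (l + k) n) => hlk.
        exists (l + k)%N, l; rewrite !hF.
        have -> : minn (l + k) n = (l + k)%N by lia.
        have -> : (l + k - n = 0)%N by lia.
        rewrite !Yd ?p0 /=; try lia. split; first by ring.
        split; first by []. rewrite Y0 /f.
        have -> : forall a b : R, a - b + 0 - (a - b) = 0 by move=> a b'; ring.
        exact: (isZn R 0).
      exists (l + k - n)%N, l; rewrite !hF.
      have -> : minn (l + k) n = n by lia.
      rewrite !Yd ?pn /=; try lia. split; first by ring.
      split; first lia.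
      have := isZn R beta; rewrite -Yx_n /f; congr isZ; ring.
    rewrite hu; split.
      by case: (p u); case: (p v); rewrite ?subrr ?normr0 ?subr0 ?sub0r ?normrN ?normr1.
    move=> hne; rewrite lt_def hrow andbT; apply/eqP => hbx.
    have hpne : p u != p v by apply: contra hne => /eqP ->; rewrite subrr.
    apply: (key _ _ hpne); have := isZB (isZn R (b i)) hz.
    by rewrite -hbx; congr isZ; ring.
  pose e1 := \big[Order.min/1]_(i | (A *m d) i 0 != 0) ((A *m x) i 0 - (b i)%:R).
  pose e2 := \big[Order.min/1]_(j | d j 0 != 0) x j 0.
  pose eps := Order.min e1 e2.
  have e1p : 0 < e1.
    apply: lt_bigmin => // i hi; rewrite subr_gt0; exact: (proj2 (rowK i) hi).
  have e2p : 0 < e2.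
    apply: lt_bigmin => // j hj; exact: (proj2 (colF j) hj).
  have epsp : 0 < eps by rewrite lt_min e1p e2p.
  have epsle1 i : (A *m d) i 0 != 0 -> eps <= (A *m x) i 0 - (b i)%:R.
    move=> hi.
    have h := @bigmin_le_cond _ _ _ 1 i (fun i => (A *m d) i 0 != 0) (fun i => (A *m x) i 0 - (b i)%:R) hi.
    apply: (le_trans _ h); by rewrite ge_min lexx.
  have epsle2 j : d j 0 != 0 -> eps <= x j 0 - 0.
    move=> hj; rewrite subr0.
    have h := @bigmin_le_cond _ _ _ 1 j (fun j => d j 0 != 0) (fun j => x j 0) hj.
    apply: (le_trans _ h); by rewrite ge_min lexx orbT.
  have sumd : \sum_j d j 0 = 0.
    by rewrite -Yn Yd // pn.
  have feas (s : R) : s = 1 \/ s = -1 -> Qbeta A b beta (x + (eps * s) *: d).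
    move=> hs; split; [|split].
    - move=> i; rewrite mulmxDr -scalemxAr !mxE.
      have [h1 h2] := rowK i.
      have [g1 g2] := pert (hrow i) h1 (ltW epsp) (epsle1 i).
      rewrite !mxE in g1 g2; by case: hs => ->; [rewrite mulr1 | rewrite mulrN1 mulNr].
    - move=> j; rewrite !mxE.
      have [h1 h2] := colF j.
      have [g1 g2] := pert (hnn j) h1 (ltW epsp) (epsle2 j).
      rewrite !mxE in g1 g2; by case: hs => ->; [rewrite mulr1 | rewrite mulrN1 mulNr].
    - rewrite (eq_bigr (fun j => x j 0 + eps * s * d j 0)); last by move=> j _; rewrite !mxE.
      by rewrite big_split /= -mulr_sumr sumd mulr0 addr0.
  have hfeas1 := feas 1 (or_introl erefl).
  have hfeas2 := feas (-1) (or_intror erefl).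
  have hmid : x = 2^-1 *: (x + (eps * 1) *: d) + (1 - 2^-1) *: (x + (eps * -1) *: d).
    apply/matrixP => a c; rewrite !mxE.
    have h2 : (2 : R) != 0 by rewrite pnatr_eq0.
    by field.
  have half0 : (0 : R) < 2^-1 by rewrite invr_gt0.
  have half1 : (2^-1 : R) < 1 by rewrite invf_lt1 // ltr1n.
  have := hvx _ _ _ hfeas1 hfeas2 half0 half1 hmid.
  move/matrixP => heq.
  have dz j : d j 0 = 0.
    have := heq j 0; rewrite !mxE mulr1 mulrN1 => h.
    set t := ((p j.+1)%:R - (p j)%:R : R) in h *.
    have : 2 * eps * t = 0 by lra.
    by move/eqP; rewrite !mulf_eq0 pnatr_eq0 (gt_eqF epsp) /= => /eqP.
  have pconst c : (c <= n)%N -> p c = p 0%N.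
    elim: c => [//|c IH] hc.
    have := dz (Ordinal hc); rewrite mxE /= => /eqP; rewrite subr_eq0 => /eqP h.
    rewrite -IH ?(ltnW hc) //.
    by move/eqP: h; rewrite eqr_nat; case: (p c.+1); case: (p c).
  by move: (pconst c0 hc0); rewrite pc0 p0.
move=> j; have := isZB (hyZ j.+1 (ltn_ord j)) (hyZ j (ltnW (ltn_ord j))).
rewrite (YS _ (ltn_ord j)) addrC addKr.
have -> : Ordinal (ltn_ord j) = j by exact: val_inj.
by [].
Qed.
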